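(* Let $q=2^n$ with $n\ge 2$. Then at most $\phi(\phi(q))+2$ of the numbers in the set $\{H_{a/q}: 1\le a\le q\}$ are linearly independent over $\overline{\mathbb{Q}}$; that is, the $\overline{\mathbb{Q}}$-linear span of this set has dimension at most $\phi(\phi(q))+2$.
   Context: $\phi$ is Euler's totient function and $\overline{\mathbb{Q}}$ is the field of algebraic numbers. For a complex number $r$ which is not a negative integer, $H_r=r\sum_{k=1}^{\infty}\frac{1}{k(r+k)}$; for $1\le a\le q$ it satisfies Gauss's formula $H_{a/q}=\frac qa-\log(2q)-\frac{\pi}{2}\cot(\pi a/q)+2\sum_{n=1}^{\lfloor (q-1)/2\rfloor}\cos(2\pi n a/q)\log\sin(\pi n/q)$. *)

(* Defs.v *)
From Stdlib Require Import Reals ZArith List Arith.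
Open Scope R_scope.

Definition totient (m : nat) : nat :=
  length (filter (fun k => Nat.eqb (Nat.gcd k m) 1) (seq 1 m)).

Definition Cx : Type := (R * R)%type.
Definition Cadd (z w : Cx) : Cx := (fst z + fst w, snd z + snd w).
Definition Cmul (z w : Cx) : Cx :=
  (fst z * fst w - snd z * snd w, fst z * snd w + snd z * fst w).
Definition C0 : Cx := (0, 0).
Definition RtoC (x : R) : Cx := (x, 0).

(* Horner evaluation of an integer-coefficient polynomial
   p = [c0; c1; ...; cd]  (c0 + c1 z + ... + cd z^d). *)
Definition Cpoly_eval (p : list Z) (z : Cx) : Cx :=
  fold_right (fun c acc => Cadd (RtoC (IZR c)) (Cmul z acc)) C0 p.

(* z is an algebraic number: root of a nonzero polynomial with integer
   (equivalently rational) coefficients. *)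
Definition algebraic (z : Cx) : Prop :=
  exists p : list Z, Exists (fun c => c <> 0%Z) p /\ Cpoly_eval p z = C0.

Definition Clincomb (s : list nat) (c : nat -> Cx) (x : nat -> R) : Cx :=
  fold_right (fun i acc => Cadd (Cmul (c i) (RtoC (x i))) acc) C0 s.

Definition H_term (r : R) (k : nat) : R :=
  / (INR (S k) * (r + INR (S k))).

Definition is_H (r h : R) : Prop :=
  exists S : R, infinite_sum (H_term r) S /\ h = r * S.

(* Main.v *)
Require Import Defs.
From Stdlib Require Import Reals ZArith List Arith Lra Lia.
From Stdlib Require Import Classical ClassicalEpsilon IndefiniteDescription.
Open Scope R_scope.


Fixpoint sumN (m : nat) (g : nat -> R) : R :=
  match m with O => 0 | S m' => sumN m' g + g m' end.

Lemma sumN_ext m g h : (forall k, (k < m)%nat -> g k = h k) -> sumN m g = sumN m h.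
Proof. induction m; intros H; simpl; auto. rewrite IHm; [rewrite H; auto|]; intros; apply H; lia. Qed.

Lemma sumN_plus m g h : sumN m (fun k => g k + h k) = sumN m g + sumN m h.
Proof. induction m; simpl; [ring|rewrite IHm; ring]. Qed.
Lemma sumN_scal m c g : sumN m (fun k => c * g k) = c * sumN m g.
Proof. induction m; simpl; [ring|rewrite IHm; ring]. Qed.
Lemma sumN_zero m g : (forall k, (k<m)%nat -> g k = 0) -> sumN m g = 0.
Proof. induction m; intros H; simpl; auto. rewrite IHm, H; [ring|lia|intros; apply H; lia]. Qed.

Lemma cv_ext u v l : (forall n, u n = v n) -> Un_cv u l -> Un_cv v l.
Proof. intros E H e He. destruct (H e He) as [N HN]. exists N. intros n Hn. rewrite <- E. auto. Qed.

Lemma cv_shift u l : Un_cv (fun n => u (S n)) l -> Un_cv u l.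
Proof. intros H e He. destruct (H e He) as [N HN]. exists (S N). intros n Hn.
  destruct n; [lia|]. apply HN. lia. Qed.

Lemma cv_sub2 u l : Un_cv u l -> Un_cv (fun n => u (2*n)%nat) l.
Proof. intros H e He. destruct (H e He) as [N HN]. exists N. intros n Hn. apply HN. lia. Qed.

Lemma cv_const c : Un_cv (fun _ => c) c.
Proof. intros e He. exists O. intros. unfold Rdist. rewrite Rminus_diag, Rabs_R0. lra. Qed.

Lemma cv_inv_lin c : 0 < c -> Un_cv (fun n => / (INR n + c)) 0.
Proof. intros Hc e He. destruct (archimed_cor1 e He) as [N [HN1 HN2]]. exists N.
  intros n Hn. unfold Rdist. rewrite Rminus_0_r.
  assert (INR N <= INR n) by (apply le_INR; lia).
  assert (0 < INR N) by (apply lt_0_INR; lia).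
  rewrite Rabs_right.
  - apply Rle_lt_trans with (/ INR N); auto. apply Rinv_le_contravar; lra.
  - left. apply Rinv_0_lt_compat. lra. Qed.

Lemma cv_scal c u l : Un_cv u l -> Un_cv (fun n => c * u n) (c * l).
Proof. intros H. apply CV_mult; auto. apply cv_const. Qed.

Definition Ssum (r : R) (M : nat) : R :=
  sumN M (fun k => / (INR k + 1) - / (INR k + 1 + r)).

Lemma Ssum_from_H r N : 0 <= r ->
  sum_f_R0 (fun k => r * H_term r k) N = Ssum r (S N).
Proof. intros Hr. unfold Ssum. induction N.
  - cbn [sum_f_R0 sumN]. unfold H_term. rewrite S_INR. cbn [INR]. field. lra.
  - cbn [sum_f_R0]. rewrite IHN. cbn [sumN]. f_equal. unfold H_term.
    rewrite !S_INR. field. split; pose proof (pos_INR N); lra.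
Qed.

Lemma H_limit r h : 0 <= r -> is_H r h -> Un_cv (Ssum r) h.
Proof. intros Hr [S [HS ->]]. apply cv_shift.
  apply cv_ext with (fun N => r * sum_f_R0 (H_term r) N).
  - intros N. rewrite <- Ssum_from_H by auto. rewrite scal_sum. apply sum_eq. intros; ring.
  - apply cv_scal. exact HS.
Qed.


Definition hsum (M : nat) : R := sumN M (fun k => / (INR k + 1)).

Lemma dup_partial x M : 0 < x ->
  Ssum (2*x) (2*M) - /2 * Ssum x M - /2 * Ssum (x + /2) M
  = (hsum (2*M) - hsum M) + /2 * / (INR M + x + /2) - / (2*x+1).
Proof. intros Hx. induction M.
  - cbn. unfold Ssum, hsum. cbn [sumN]. field. lra.
  - replace (2 * S M)%nat with (S (S (2*M))) by lia.
    unfold Ssum, hsum in *. cbn [sumN]. rewrite !S_INR, !mult_INR. cbn [INR].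
    try rewrite !mult_INR in IHM.
    pose proof (pos_INR M).
    match goal with |- ?L = ?R => assert (L - R = 0); [|lra] end.
    match type of IHM with ?L = ?R => assert (E: L - R = 0) by lra end.
    rewrite <- E. field. repeat split; lra.
Qed.

Lemma T_limit x h1 h2 h3 : 0 < x ->
  Un_cv (Ssum (2*x)) h1 -> Un_cv (Ssum x) h2 -> Un_cv (Ssum (x + /2)) h3 ->
  Un_cv (fun M => hsum (2*M) - hsum M) (h1 - /2*h2 - /2*h3 + / (2*x+1)).
Proof. intros Hx H1 H2 H3.
  apply cv_ext with (fun M => (Ssum (2*x) (2*M) - /2 * Ssum x M - /2 * Ssum (x + /2) M)
     - /2 * / (INR M + (x + /2)) + / (2*x+1)).
  - intros M. rewrite dup_partial by auto. replace (INR M + (x + /2)) with (INR M + x + /2) by ring. ring.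
  - replace (h1 - /2*h2 - /2*h3 + / (2*x+1)) with ((h1 - /2*h2 - /2*h3) - /2 * 0 + / (2*x+1)) by ring.
    apply CV_plus; [|apply cv_const]. apply CV_minus.
    + apply CV_minus; [apply CV_minus|]; [apply cv_sub2; auto|apply cv_scal; auto|apply cv_scal; auto].
    + apply cv_scal. apply cv_inv_lin. lra.
Qed.

Definition Hyp (f : nat) (Hv : nat -> R) : Prop :=
  forall a : nat, (1 <= a <= 4 * f)%nat -> is_H (INR a / INR (4 * f)) (Hv a).

Definition Kc (f : nat) (Hv : nat -> R) : R :=
  Hv (4*f)%nat - /2 * Hv (2*f)%nat - /2 * Hv (4*f)%nat + /2.

Lemma Hv_limit f Hv a : Hyp f Hv -> (1 <= a <= 4*f)%nat ->
  Un_cv (Ssum (INR a / INR (4*f))) (Hv a).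
Proof. intros H Ha. apply H_limit; [|apply H; auto].
  apply Rmult_le_pos; [apply pos_INR|left; apply Rinv_0_lt_compat; apply lt_0_INR; lia]. Qed.

Lemma dup_rel f Hv a : (1 <= f)%nat -> Hyp f Hv -> (1 <= a <= 2*f)%nat ->
  Hv (2*a)%nat = /2 * Hv a + /2 * Hv (a + 2*f)%nat + Kc f Hv - INR (4*f) / INR (2*a + 4*f).
Proof. intros Hf H Ha.
  assert (Hq : 0 < INR (4*f)) by (apply lt_0_INR; lia).
  set (x := INR a / INR (4*f)).
  assert (Hx : 0 < x) by (unfold x; apply Rdiv_lt_0_compat; auto; apply lt_0_INR; lia).
  assert (L1 : Un_cv (Ssum (2*x)) (Hv (2*a)%nat)).
  { replace (2*x) with (INR (2*a) / INR (4*f)). apply Hv_limit; auto; lia.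
    unfold x. rewrite mult_INR. cbn [INR]. field. lra. }
  assert (L3 : Un_cv (Ssum (x + /2)) (Hv (a+2*f)%nat)).
  { replace (x + /2) with (INR (a+2*f) / INR (4*f)). apply Hv_limit; auto; lia.
    unfold x. rewrite plus_INR, !mult_INR. cbn [INR]. rewrite mult_INR in Hq. cbn [INR] in Hq. field. lra. }
  assert (L2 : Un_cv (Ssum x) (Hv a)) by (apply Hv_limit; auto; lia).
  pose proof (T_limit x _ _ _ Hx L1 L2 L3) as T1.
  set (y := INR (2*f) / INR (4*f)).
  assert (Hy : y = /2). { unfold y. rewrite !mult_INR. cbn [INR]. field. rewrite mult_INR in Hq. cbn [INR] in Hq. lra. }
  assert (M1 : Un_cv (Ssum (2*y)) (Hv (4*f)%nat)).
  { replace (2*y) with (INR (4*f) / INR (4*f)). apply Hv_limit; auto; lia.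
    rewrite Hy. field. lra. }
  assert (M3 : Un_cv (Ssum (y + /2)) (Hv (4*f)%nat)).
  { replace (y + /2) with (INR (4*f) / INR (4*f)). apply Hv_limit; auto; lia.
    rewrite Hy. field. lra. }
  assert (M2 : Un_cv (Ssum y) (Hv (2*f)%nat)) by (apply Hv_limit; auto; lia).
  assert (Hy0 : 0 < y) by lra.
  pose proof (T_limit y _ _ _ Hy0 M1 M2 M3) as T2.
  pose proof (UL_sequence _ _ _ T1 T2) as E.
  unfold Kc. rewrite Hy in E.
  assert (E2 : / (2*x+1) = INR (4*f) / INR (2*a + 4*f)).
  { unfold x. rewrite plus_INR, !mult_INR. cbn [INR]. rewrite mult_INR in Hq. cbn [INR] in Hq.
    field. split; [|lra]. pose proof (pos_INR a). lra. }
  rewrite <- E2. replace (2 * / 2 + 1) with 2 in E by field. lra.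
Qed.


Definition Dpart (r : R) (M : nat) : R :=
  / r + sumN M (fun k => / (INR k + 1 + r) - / (INR k + 1 - r)).

Lemma refl_partial r M : 0 < r < 1 ->
  Ssum (1-r) M - Ssum r M + / r - / (1-r) = Dpart r M - / (INR M + 1 - r).
Proof. intros Hr. induction M.
  - unfold Ssum, Dpart. cbn [sumN INR]. field. lra.
  - unfold Ssum, Dpart in *. cbn [sumN]. rewrite S_INR. pose proof (pos_INR M).
    match goal with |- ?L = ?R => assert (L - R = 0); [|lra] end.
    match type of IHM with ?L = ?R => assert (E: L - R = 0) by lra end.
    rewrite <- E. field. repeat split; lra.
Qed.

Lemma dupD_partial x M : 0 < x < /2 ->
  Dpart x M + Dpart (x + /2) M = 2 * Dpart (2*x) (2*M) + 2 / (2 * INR M + 1 + 2*x).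
Proof. intros Hx. induction M.
  - unfold Dpart. replace (2*0)%nat with 0%nat by lia. cbn [sumN INR]. field. lra.
  - replace (2 * S M)%nat with (S (S (2*M))) by lia.
    unfold Dpart in *. cbn [sumN]. rewrite !S_INR, !mult_INR. cbn [INR]. pose proof (pos_INR M).
    match goal with |- ?L = ?R => assert (L - R = 0); [|lra] end.
    match type of IHM with ?L = ?R => assert (E: L - R = 0) by lra end.
    rewrite <- E. field. repeat split; lra.
Qed.

Lemma oddD_partial r M : 0 < r < 1 ->
  Dpart (1-r) M = - Dpart r M + / (INR M + 1 - r) + / (INR M + r).
Proof. intros Hr. induction M.
  - unfold Dpart. cbn [sumN INR]. field. lra.
  - unfold Dpart in *. cbn [sumN]. rewrite !S_INR. pose proof (pos_INR M).
    match goal with |- ?L = ?R => assert (L - R = 0); [|lra] end.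
    match type of IHM with ?L = ?R => assert (E: L - R = 0) by lra end.
    rewrite <- E. field. repeat split; lra.
Qed.

Definition Esum (r : R) (M : nat) : R := sumN M (fun k => / (INR k + 1 - r) - / (INR k + 1 + r)).

Lemma Dpart_E r M : Dpart r M = / r - Esum r M.
Proof. unfold Dpart, Esum. induction M; cbn [sumN]; [ring|]. lra. Qed.

Lemma Esum_nonneg r M : 0 < r < 1 -> 0 <= Esum r M.
Proof. intros Hr. induction M; unfold Esum in *; cbn [sumN]; [lra|].
  pose proof (pos_INR M).
  assert (/ (INR M + 1 + r) <= / (INR M + 1 - r)) by (apply Rinv_le_contravar; lra). lra. Qed.

Lemma Esum_ub r M : 0 < r < 1 -> Esum r (S M) <= / (1-r) + 3/2 - / (INR M + 1) - / (INR M + 2).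
Proof. intros Hr. induction M.
  - unfold Esum. cbn [sumN INR]. replace (0+1-r) with (1-r) by ring.
    assert (0 < / (0+1+r)) by (apply Rinv_0_lt_compat; lra).
    replace (/ (0+1) ) with 1 by field. replace (/ (0+2)) with (/2) by (f_equal; ring). lra.
  - unfold Esum in *. cbn [sumN] in *. rewrite S_INR. pose proof (pos_INR M).
    assert (A1 : / (INR M + 1 + 1 - r) <= / (INR M + 1)) by (apply Rinv_le_contravar; lra).
    assert (A2 : / (INR M + 3) <= / (INR M + 1 + 1 + r)) by (apply Rinv_le_contravar; lra).
    replace (INR M + 1 + 1) with (INR M + 2) by ring. replace (INR M + 1 + 2) with (INR M + 3) by ring.
    replace (INR M + 1 + 1 - r) with (INR M + 2 - r) in A1 by ring.
    replace (INR M + 1 + 1 + r) with (INR M + 2 + r) in A2 by ring.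
    lra.
Qed.

Lemma Esum_small r M : 0 < r <= /2 -> Esum r M <= 4*r - 2*r / (INR M + /2).
Proof. intros Hr. induction M.
  - unfold Esum. cbn [sumN INR]. replace (2*r/(0+/2)) with (4*r) by field. lra.
  - unfold Esum in *. cbn [sumN]. rewrite S_INR. pose proof (pos_INR M).
    assert (B : / (INR M + 1 - r) - / (INR M + 1 + r) <= 2*r/(INR M + /2) - 2*r/(INR M + 1 + /2)).
    { assert (E1 : / (INR M + 1 - r) - / (INR M + 1 + r) = 2*r / ((INR M + 1)*(INR M+1) - r*r)) by (field; repeat split; nra).
      assert (E2 : 2*r/(INR M + /2) - 2*r/(INR M + 1 + /2) = 2*r / ((INR M + 1)*(INR M+1) - /4)) by (field; repeat split; nra).
      rewrite E1, E2. unfold Rdiv. apply Rmult_le_compat_l; [lra|]. apply Rinv_le_contravar; nra. }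
    lra.
Qed.

Lemma Dpart_decr r : 0 < r < 1 -> Un_decreasing (Dpart r).
Proof. intros Hr M. rewrite !Dpart_E. unfold Esum. cbn [sumN]. pose proof (pos_INR M).
  assert (/ (INR M + 1 + r) <= / (INR M + 1 - r)) by (apply Rinv_le_contravar; lra). lra. Qed.

Lemma Dpart_lb r M : 0 < r < 1 -> / r - / (1-r) - 3/2 <= Dpart r M.
Proof. intros Hr. rewrite Dpart_E. destruct M.
  - unfold Esum. cbn [sumN]. assert (0 < / (1-r)) by (apply Rinv_0_lt_compat; lra). lra.
  - pose proof (Esum_ub r M Hr). pose proof (pos_INR M).
    assert (0 < / (INR M + 1)) by (apply Rinv_0_lt_compat; lra).
    assert (0 < / (INR M + 2)) by (apply Rinv_0_lt_compat; lra). lra.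
Qed.

Lemma Dpart_cv r : 0 < r < 1 -> exists l, Un_cv (Dpart r) l.
Proof. intros Hr. destruct (decreasing_cv (Dpart r)) as [l Hl].
  - apply Dpart_decr; auto.
  - exists (- (/ r - / (1-r) - 3/2)). intros y [n ->]. unfold opp_seq.
    pose proof (Dpart_lb r n Hr). lra.
  - exists l; auto.
Qed.

Definition Dl (r : R) : R := epsilon (inhabits 0) (fun l => Un_cv (Dpart r) l).

Lemma Dl_spec r : 0 < r < 1 -> Un_cv (Dpart r) (Dl r).
Proof. intros Hr. unfold Dl. apply epsilon_spec. apply Dpart_cv; auto. Qed.

Lemma cv_le u l c : Un_cv u l -> (forall n, u n <= c) -> l <= c.
Proof. intros H Hc. apply Rnot_lt_le. intros Hlt. destruct (H (l - c)) as [N HN]; [lra|].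
  specialize (HN N (le_n _)). specialize (Hc N). unfold Rdist in HN.
  apply Rabs_def2 in HN. lra. Qed.
Lemma cv_ge u l c : Un_cv u l -> (forall n, c <= u n) -> c <= l.
Proof. intros H Hc. apply Rnot_lt_le. intros Hlt. destruct (H (c - l)) as [N HN]; [lra|].
  specialize (HN N (le_n _)). specialize (Hc N). unfold Rdist in HN.
  apply Rabs_def2 in HN. lra. Qed.

Lemma Dl_bound r : 0 < r <= /2 -> / r - 4*r <= Dl r <= / r.
Proof. intros Hr. assert (Hr' : 0 < r < 1) by lra. pose proof (Dl_spec r Hr'). split.
  - apply cv_ge with (Dpart r); auto. intros n. rewrite Dpart_E. pose proof (Esum_small r n Hr).
    pose proof (pos_INR n). assert (0 <= 2*r/(INR n + /2)).
    { apply Rmult_le_pos; [lra|left; apply Rinv_0_lt_compat; lra]. } lra.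
  - apply cv_le with (Dpart r); auto. intros n. rewrite Dpart_E. pose proof (Esum_nonneg r n Hr'). lra.
Qed.

Lemma Dl_odd r : 0 < r < 1 -> Dl (1-r) = - Dl r.
Proof. intros Hr. assert (H1 : 0 < 1-r < 1) by lra.
  pose proof (Dl_spec _ H1) as A. pose proof (Dl_spec _ Hr) as B.
  assert (C : Un_cv (Dpart (1-r)) (- Dl r + 0 + 0)).
  { apply cv_ext with (fun M => - Dpart r M + / (INR M + (1 - r)) + / (INR M + r)).
    - intros M. rewrite oddD_partial by auto. f_equal. f_equal. f_equal. ring.
    - apply CV_plus; [apply CV_plus|]. 
      + apply cv_ext with (fun M => -1 * Dpart r M); [intros; ring|].
        replace (- Dl r) with (-1 * Dl r) by ring. apply cv_scal; auto.
      + apply cv_inv_lin. lra.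
      + apply cv_inv_lin. lra. }
  rewrite (UL_sequence _ _ _ A C). ring.
Qed.

Lemma Dl_dup x : 0 < x < /2 -> Dl x + Dl (x + /2) = 2 * Dl (2*x).
Proof. intros Hx.
  assert (H1 : 0 < x < 1) by lra. assert (H2 : 0 < x + /2 < 1) by lra. assert (H3 : 0 < 2*x < 1) by lra.
  pose proof (Dl_spec _ H1) as A. pose proof (Dl_spec _ H2) as B. pose proof (Dl_spec _ H3) as C.
  assert (D : Un_cv (fun M => Dpart x M + Dpart (x + /2) M) (2 * Dl (2*x) + 0)).
  { apply cv_ext with (fun M => 2 * Dpart (2*x) (2*M) + / (INR M + (/2 + x))).
    - intros M. rewrite dupD_partial by auto. pose proof (pos_INR M).
      replace (2 / (2 * INR M + 1 + 2*x)) with (/ (INR M + (/2 + x))); [ring|].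
      replace (2 * INR M + 1 + 2*x) with (2 * (INR M + (/2 + x))) by lra. field. lra.
    - apply CV_plus; [apply cv_scal; apply cv_sub2; auto|apply cv_inv_lin; lra]. }
  pose proof (CV_plus _ _ _ _ A B) as E. rewrite (UL_sequence _ _ _ E D). ring.
Qed.


Lemma sin_lb_eq a : sin_lb a = a - a^3/6 + a^5/120 - a^7/5040.
Proof. unfold sin_lb, sin_approx, sin_term. cbn [sum_f_R0 Factorial.fact Nat.mul Nat.add].
 rewrite !INR_IZR_INZ. cbn [Z.of_nat Pos.of_succ_nat Pos.succ]. field. Qed.
Lemma sin_ub_eq a : sin_ub a = a - a^3/6 + a^5/120 - a^7/5040 + a^9/362880.
Proof. unfold sin_ub, sin_approx, sin_term. cbn [sum_f_R0 Nat.mul Nat.add].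
 repeat rewrite fact_simpl. rewrite ?mult_INR. cbn [Factorial.fact INR]. field. Qed.
Lemma cos_lb_eq a : cos_lb a = 1 - a^2/2 + a^4/24 - a^6/720.
Proof. unfold cos_lb, cos_approx, cos_term. cbn [sum_f_R0 Factorial.fact Nat.mul Nat.add].
 rewrite !INR_IZR_INZ. cbn [Z.of_nat Pos.of_succ_nat Pos.succ]. field. Qed.
Lemma cos_ub_eq a : cos_ub a = 1 - a^2/2 + a^4/24 - a^6/720 + a^8/40320.
Proof. unfold cos_ub, cos_approx, cos_term. cbn [sum_f_R0 Nat.mul Nat.add].
 repeat rewrite fact_simpl. rewrite ?mult_INR. cbn [Factorial.fact INR]. field. Qed.

Lemma trig_bound r : 0 < r <= /2 -> Rabs (PI * (cos (PI*r) / sin (PI*r)) - / r) <= 16 * r.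
Proof. intros Hr. pose proof PI_RGT_0 as HP. pose proof PI_4 as HP4.
  set (t := PI * r).
  assert (Ht : 0 < t <= PI/2) by (unfold t; split; nra).
  assert (Ht2 : t <= 2) by lra.
  destruct (SIN t) as [S1 S2]; try lra. destruct (COS t) as [C1 C2]; try lra.
  rewrite sin_lb_eq in S1. rewrite sin_ub_eq in S2. rewrite cos_lb_eq in C1. rewrite cos_ub_eq in C2.
  set (s := sin t) in *. set (c := cos t) in *.
  assert (T2 : t^2 <= 4) by nra. assert (T4 : t^4 <= 16) by nra. assert (T6 : t^6 <= 64) by nra.
  assert (P3 : 0 < t^3) by (apply pow_lt; lra). assert (P5 : 0 < t^5) by (apply pow_lt; lra).
  assert (P7 : 0 < t^7) by (apply pow_lt; lra).
  assert (Hs : t/3 <= s).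
  { assert (t^7 = t^5 * t^2) by ring. assert (t^3 = t * t^2) by ring.
    assert (t^5 * t^2 <= t^5 * 4) by nra. assert (t * t^2 <= t*4) by nra. lra. }
  assert (N1 : t*c - s <= 0).
  { assert (A : t*c - s <= t*(1 - t^2/2 + t^4/24 - t^6/720 + t^8/40320) - (t - t^3/6 + t^5/120 - t^7/5040)) by nra.
    replace (t*(1 - t^2/2 + t^4/24 - t^6/720 + t^8/40320) - (t - t^3/6 + t^5/120 - t^7/5040))
      with (t^3 * (-/3 + t^2/30 + t^6/40320) - t^7 * (/720 - /5040)) in A by field.
    assert (t^3 * (-/3 + t^2/30 + t^6/40320) <= 0) by nra. nra. }
  assert (N2 : - (t^3/3) <= t*c - s).
  { assert (A : t*(1 - t^2/2 + t^4/24 - t^6/720) - (t - t^3/6 + t^5/120 - t^7/5040 + t^9/362880) <= t*c - s) by nra.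
    replace (t*(1 - t^2/2 + t^4/24 - t^6/720) - (t - t^3/6 + t^5/120 - t^7/5040 + t^9/362880))
      with (- (t^3/3) + t^5 * (/30 - t^2 * (/720 - /5040) - t^4/362880)) in A by field.
    assert (0 <= t^5 * (/30 - t^2 * (/720 - /5040) - t^4/362880)) by nra. lra. }
  assert (Hsp : 0 < s) by nra.
  assert (Eq : PI * (c / s) - / r = PI * ((t*c - s) / (t * s))).
  { unfold t. field. split; lra. }
  rewrite Eq.
  assert (X1 : (t*c - s) / (t*s) <= 0).
  { assert (0 < / (t*s)) by (apply Rinv_0_lt_compat; nra). unfold Rdiv. nra. }
  assert (X2 : - t <= (t*c - s) / (t*s)).
  { apply Rmult_le_reg_r with (t*s). nra. unfold Rdiv. rewrite Rmult_assoc, Rinv_l by nra.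
    assert (t*t*s >= t^3/3) by nra. nra. }
  rewrite Rabs_left1.
  - assert (PI * t <= 16 * r). { unfold t. assert (PI*PI <= 16) by nra. replace (PI*(PI*r)) with ((PI*PI)*r) by ring. nra. } nra.
  - nra.
Qed.

Lemma Rabs_inv x b : Rabs x <= b -> -b <= x <= b.
Proof. unfold Rabs. destruct (Rcase_abs x); lra. Qed.

Definition fH (r : R) : R := Dl r - PI * (cos (PI*r) / sin (PI*r)).

Lemma fH_small r : 0 < r <= /2 -> Rabs (fH r) <= 20 * r.
Proof. intros Hr. pose proof (trig_bound r Hr). pose proof (Dl_bound r Hr). unfold fH.
  apply Rabs_inv in H. apply Rabs_le. lra. Qed.

Lemma fH_odd r : 0 < r < 1 -> fH (1-r) = - fH r.
Proof. intros Hr. unfold fH. rewrite Dl_odd by auto.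
  replace (PI * (1-r)) with (PI - PI*r) by ring. rewrite sin_PI_x, Rtrigo_facts.cos_pi_minus.
  unfold Rdiv. ring. Qed.

Lemma fH_dup x : 0 < x < /2 -> fH x + fH (x + /2) = 2 * fH (2*x).
Proof. intros Hx. unfold fH. pose proof (Dl_dup x Hx). pose proof PI_RGT_0.
  set (t := PI * x).
  assert (Ht : 0 < t < PI/2) by (unfold t; split; nra).
  replace (PI * (x + /2)) with (t + PI/2) by (unfold t; field).
  replace (PI * (2*x)) with (2*t) by (unfold t; ring).
  rewrite cos_plus, sin_plus, cos_PI2, sin_PI2, cos_2a, sin_2a.
  assert (0 < sin t) by (apply sin_gt_0; lra). assert (0 < cos t) by (apply cos_gt_0; lra).
  assert (E : cos t / sin t + (cos t * 0 - sin t * 1) / (sin t * 0 + cos t * 1)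
              = 2 * ((cos t * cos t - sin t * sin t) / (2 * sin t * cos t))) by (field; lra).
  assert (E' : PI * (cos t / sin t) + PI * ((cos t * 0 - sin t * 1) / (sin t * 0 + cos t * 1))
     = 2 * (PI * ((cos t * cos t - sin t * sin t) / (2 * sin t * cos t)))).
  { rewrite <- Rmult_plus_distr_l, E. ring. }
  lra.
Qed.


Lemma fH_bounded r : 0 < r < 1 -> -10 <= fH r <= 10.
Proof. intros Hr. destruct (Rle_or_lt r (/2)).
  - pose proof (fH_small r (conj (proj1 Hr) H)). apply Rabs_inv in H0. lra.
  - assert (H1 : 0 < 1 - r <= /2) by lra. pose proof (fH_small _ H1). apply Rabs_inv in H0.
    assert (Hr' : 0 < 1 - r < 1) by lra. pose proof (fH_odd _ Hr') as E.
    replace (1 - (1 - r)) with r in E by ring. lra.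
Qed.

Lemma pow2_ge n : INR n <= 2^n.
Proof. induction n. - cbn. lra. - rewrite S_INR. cbn [pow]. assert (1 <= 2^n) by (apply pow_R1_Rle; lra). lra. Qed.

Lemma fH_nonpos r : 0 < r < 1 -> fH r <= 0.
Proof. intros Hr.
  set (E := fun y => exists r, 0 < r < 1 /\ y = fH r).
  destruct (completeness E) as [S [HSub HSl]].
  { exists 10. intros y [r' [Hr' ->]]. apply fH_bounded; auto. }
  { exists (fH (/2)). exists (/2). split; [lra|auto]. }
  assert (HrS : fH r <= S) by (apply HSub; exists r; auto).
  destruct (Rle_or_lt S 0) as [HS|HS]; [lra|]. exfalso.
  destruct (archimed_cor1 (S/40)) as [N [HN1 HN2]]; [lra|].
  set (d := S / 2^(Datatypes.S N)).
  assert (Hd : 0 < d) by (unfold d; apply Rdiv_lt_0_compat; auto; apply pow_lt; lra).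
  destruct (classic (exists r0, 0 < r0 < 1 /\ S - d < fH r0)) as [[r0 [Hr0 Hf0]]|Hno].
  2: { assert (is_upper_bound E (S - d)).
       { intros y [r' [Hr' ->]]. apply Rnot_lt_le. intros Hc. apply Hno. exists r'. auto. }
       specialize (HSl _ H). lra. }
  assert (IT : forall j, 0 < r0 / 2^j < 1 /\ S - 2^j * d <= fH (r0 / 2^j)).
  { induction j.
    - cbn [pow]. replace (r0/1) with r0 by field. split; [lra|]. lra.
    - destruct IHj as [[Hy1 Hy2] Hy3].
      set (y := r0 / 2^j) in *.
      assert (Ey : r0 / 2^(Datatypes.S j) = y / 2) by (unfold y; cbn [pow]; field; apply pow_nonzero; lra).
      rewrite Ey. split; [lra|].
      assert (Hx : 0 < y/2 < /2) by lra.
      pose proof (fH_dup _ Hx) as Dp. replace (2 * (y/2)) with y in Dp by field.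
      assert (fH (y/2 + /2) <= S) by (apply HSub; exists (y/2 + /2); split; [lra|auto]).
      cbn [pow]. lra. }
  destruct (IT N) as [[Hz1 Hz2] Hz3].
  assert (E2 : 2^N * d = S / 2) by (unfold d; cbn [pow]; field; apply pow_nonzero; lra).
  rewrite E2 in Hz3.
  assert (P2 : 2 <= 2^N).
  { destruct N; [lia|]. cbn [pow]. assert (1 <= 2^N) by (apply pow_R1_Rle; lra). lra. }
  assert (Hz : 0 < r0 / 2^N <= /2).
  { split; [lra|]. unfold Rdiv. apply Rmult_le_reg_r with (2^N); [lra|].
    rewrite Rmult_assoc, Rinv_l by lra. nra. }
  pose proof (fH_small _ Hz) as Hsm. apply Rabs_inv in Hsm.
  assert (r0 / 2^N < / INR N).
  { pose proof (pow2_ge N). assert (0 < INR N) by (apply lt_0_INR; lia).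
    unfold Rdiv. apply Rlt_le_trans with (1 * / 2^N).
    - apply Rmult_lt_compat_r; [apply Rinv_0_lt_compat; lra|lra].
    - rewrite Rmult_1_l. apply Rinv_le_contravar; lra. }
  lra.
Qed.

Lemma fH_zero r : 0 < r < 1 -> fH r = 0.
Proof. intros Hr. pose proof (fH_nonpos r Hr).
  assert (Hr' : 0 < 1 - r < 1) by lra. pose proof (fH_nonpos _ Hr'). rewrite fH_odd in H0 by auto. lra. Qed.

Lemma Dl_cot r : 0 < r < 1 -> Dl r = PI * (cos (PI*r) / sin (PI*r)).
Proof. intros Hr. pose proof (fH_zero r Hr). unfold fH in H. lra. Qed.


Definition cot (x : R) : R := cos x / sin x.

Lemma refl_rel f Hv a : (1 <= f)%nat -> Hyp f Hv -> (1 <= a < 4*f)%nat ->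
  Hv (4*f - a)%nat = Hv a - INR (4*f) / INR a + INR (4*f) / INR (4*f - a) + PI * cot (PI * INR a / INR (4*f)).
Proof. intros Hf H Ha.
  assert (Hq : 0 < INR (4*f)) by (apply lt_0_INR; lia).
  assert (Haq : INR a < INR (4*f)) by (apply lt_INR; lia).
  assert (Ha0 : 0 < INR a) by (apply lt_0_INR; lia).
  set (r := INR a / INR (4*f)).
  assert (Hr : 0 < r < 1).
  { unfold r. split; [apply Rdiv_lt_0_compat; auto|]. apply Rmult_lt_reg_r with (INR (4*f)); auto.
    unfold Rdiv. rewrite Rmult_assoc, Rinv_l by lra. lra. }
  assert (L1 : Un_cv (Ssum (1-r)) (Hv (4*f-a)%nat)).
  { replace (1-r) with (INR (4*f-a) / INR (4*f)). apply Hv_limit; auto; lia.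
    unfold r. rewrite minus_INR by lia. field. lra. }
  assert (L2 : Un_cv (Ssum r) (Hv a)) by (apply Hv_limit; auto; lia).
  assert (A : Un_cv (Dpart r) (Hv (4*f-a)%nat - Hv a + / r - / (1-r) + 0)).
  { apply cv_ext with (fun M => (Ssum (1-r) M - Ssum r M + / r - / (1-r)) + / (INR M + (1 - r))).
    - intros M. rewrite refl_partial by auto. replace (INR M + (1-r)) with (INR M + 1 - r) by ring. ring.
    - apply CV_plus; [|apply cv_inv_lin; lra].
      apply CV_minus; [apply CV_plus|apply cv_const]; [apply CV_minus|apply cv_const]; auto. }
  pose proof (UL_sequence _ _ _ A (Dl_spec r Hr)) as E.
  rewrite Dl_cot in E by auto. unfold cot.
  replace (PI * INR a / INR (4*f)) with (PI * r) by (unfold r; field; lra).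
  assert (E1 : / r = INR (4*f) / INR a) by (unfold r; field; split; lra).
  assert (E2 : / (1-r) = INR (4*f) / INR (4*f - a)).
  { unfold r. rewrite minus_INR by lia. field. split; lra. }
  rewrite <- E1, <- E2. lra.
Qed.

Lemma Ssum_one M : Ssum 1 M = 1 - / (INR M + 1).
Proof. induction M; unfold Ssum in *; cbn [sumN]; rewrite ?S_INR; cbn [INR].
  - field.
  - rewrite IHM. pose proof (pos_INR M). field. lra. Qed.

Lemma H_one f Hv : (1 <= f)%nat -> Hyp f Hv -> Hv (4*f)%nat = 1.
Proof. intros Hf H.
  assert (Hq : 0 < INR (4*f)) by (apply lt_0_INR; lia).
  pose proof (Hv_limit f Hv (4*f) H ltac:(lia)) as L.
  replace (INR (4*f) / INR (4*f)) with 1 in L by (field; lra).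
  assert (A : Un_cv (Ssum 1) (1 - 0)).
  { apply cv_ext with (fun M => 1 - / (INR M + 1)); [intros; rewrite Ssum_one; auto|].
    apply CV_minus; [apply cv_const|apply cv_inv_lin; lra]. }
  rewrite (UL_sequence _ _ _ L A). ring.
Qed.


Definition Qr (x : R) : Prop := exists z d : Z, d <> 0%Z /\ x = IZR z / IZR d.

Lemma Qr_IZR z : Qr (IZR z).
Proof. exists z, 1%Z. split; [lia|]. field. Qed.
Lemma Qr_INR n : Qr (INR n).
Proof. rewrite INR_IZR_INZ. apply Qr_IZR. Qed.
Lemma Qr_0 : Qr 0. Proof. apply (Qr_IZR 0). Qed.
Lemma Qr_1 : Qr 1. Proof. apply (Qr_IZR 1). Qed.
Lemma Qr_plus x y : Qr x -> Qr y -> Qr (x + y).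
Proof. intros [a [b [Hb ->]]] [c [d [Hd ->]]]. exists (a*d + c*b)%Z, (b*d)%Z. split; [lia|].
  rewrite plus_IZR, !mult_IZR. apply not_0_IZR in Hb. apply not_0_IZR in Hd. field. auto. Qed.
Lemma Qr_opp x : Qr x -> Qr (- x).
Proof. intros [a [b [Hb ->]]]. exists (-a)%Z, b. split; auto. rewrite opp_IZR.
  apply not_0_IZR in Hb. field. auto. Qed.
Lemma Qr_minus x y : Qr x -> Qr y -> Qr (x - y).
Proof. intros. apply Qr_plus; auto. apply Qr_opp; auto. Qed.
Lemma Qr_mult x y : Qr x -> Qr y -> Qr (x * y).
Proof. intros [a [b [Hb ->]]] [c [d [Hd ->]]]. exists (a*c)%Z, (b*d)%Z. split; [lia|].
  rewrite !mult_IZR. apply not_0_IZR in Hb. apply not_0_IZR in Hd. field. auto. Qed.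
Lemma Qr_inv x : Qr x -> Qr (/ x).
Proof. intros [a [b [Hb ->]]]. destruct (Z.eq_dec a 0) as [->|Ha].
  - unfold Rdiv. rewrite Rmult_0_l, Rinv_0. apply Qr_0.
  - exists b, a. split; auto. apply not_0_IZR in Hb. apply not_0_IZR in Ha. field. auto. Qed.
Lemma Qr_div x y : Qr x -> Qr y -> Qr (x / y).
Proof. intros. apply Qr_mult; auto. apply Qr_inv; auto. Qed.

Fixpoint lsum (s : list nat) (g : nat -> R) : R :=
  match s with nil => 0 | a :: s' => g a + lsum s' g end.

Lemma lsum_ext s g h : (forall a, In a s -> g a = h a) -> lsum s g = lsum s h.
Proof. induction s; intros H; cbn [lsum]; auto. rewrite H by (left; auto). rewrite IHs; auto. intros; apply H; right; auto. Qed.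
Lemma lsum_plus s g h : lsum s (fun a => g a + h a) = lsum s g + lsum s h.
Proof. induction s; cbn [lsum]; [ring|rewrite IHs; ring]. Qed.
Lemma lsum_scal s c g : lsum s (fun a => c * g a) = c * lsum s g.
Proof. induction s; cbn [lsum]; [ring|rewrite IHs; ring]. Qed.
Lemma lsum_zero s g : (forall a, In a s -> g a = 0) -> lsum s g = 0.
Proof. induction s; intros H; cbn [lsum]; auto. rewrite H, IHs; [ring| |left; auto]. intros; apply H; right; auto. Qed.
Lemma Qr_lsum s g : (forall a, In a s -> Qr (g a)) -> Qr (lsum s g).
Proof. induction s; intros H; cbn [lsum]; [apply Qr_0|]. apply Qr_plus; [apply H; left; auto|apply IHs; intros; apply H; right; auto]. Qed.
Lemma lsum_sumN s m g : lsum s (fun a => sumN m (g a)) = sumN m (fun j => lsum s (fun a => g a j)).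
Proof. induction s; cbn [lsum].
  - symmetry. apply sumN_zero. auto.
  - rewrite IHs. rewrite <- sumN_plus. auto. Qed.

Lemma lsum_remove s a0 g : NoDup s -> In a0 s ->
  lsum s g = g a0 + lsum (remove Nat.eq_dec a0 s) g.
Proof. induction s as [|a s IH]; intros Hn Hi; [destruct Hi|].
  inversion Hn; subst. cbn [lsum remove].
  destruct (Nat.eq_dec a0 a) as [->|Hne].
  - rewrite notin_remove by auto. auto.
  - destruct Hi as [->|Hi]; [congruence|]. cbn [lsum]. rewrite IH by auto. ring.
Qed.

Lemma remove_length_NoDup s a0 : NoDup s -> In a0 s -> S (length (remove Nat.eq_dec a0 s)) = length s.
Proof. induction s as [|a s IH]; intros Hn Hi; [destruct Hi|].
  inversion Hn; subst. cbn [remove].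
  destruct (Nat.eq_dec a0 a) as [->|Hne].
  - rewrite notin_remove by auto. auto.
  - destruct Hi as [->|Hi]; [congruence|]. cbn [length]. rewrite IH; auto. Qed.

Lemma NoDup_remove' s a0 : NoDup s -> NoDup (remove Nat.eq_dec a0 s).
Proof. induction s as [|a s IH]; intros Hn; cbn [remove]; [constructor|]. inversion Hn; subst.
  destruct (Nat.eq_dec a0 a); auto. constructor; auto. intros Hi. apply in_remove in Hi. tauto. Qed.

Lemma dep m : forall (s : list nat) (v : nat -> nat -> R),
  NoDup s -> (forall a j, Qr (v a j)) -> (m < length s)%nat ->
  exists lam : nat -> R, (forall a, Qr (lam a)) /\ (exists a, In a s /\ lam a <> 0) /\
    forall j, (j < m)%nat -> lsum s (fun a => lam a * v a j) = 0.
Proof. induction m; intros s v Hn Hv Hl.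
  - destruct s as [|a0 s]; [cbn in Hl; lia|].
    exists (fun a => if Nat.eq_dec a a0 then 1 else 0). split; [|split].
    + intros a. destruct (Nat.eq_dec a a0); [apply Qr_1|apply Qr_0].
    + exists a0. split; [left; auto|]. destruct (Nat.eq_dec a0 a0); [lra|congruence].
    + intros; lia.
  - destruct (classic (exists a0, In a0 s /\ v a0 m <> 0)) as [[a0 [Ha0 Hv0]]|Hno].
    + set (s' := remove Nat.eq_dec a0 s).
      pose proof (remove_length_NoDup s a0 Hn Ha0) as Hlen. fold s' in Hlen.
      set (w := fun a j => v a j - (v a m / v a0 m) * v a0 j).
      destruct (IHm s' w (NoDup_remove' s a0 Hn)) as [lam' [Hq [[a1 [Ha1 Hnz]] Hs]]].
      { intros a j. unfold w. apply Qr_minus; auto. apply Qr_mult; auto. apply Qr_div; auto. }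
      { lia. }
      set (c0 := - lsum s' (fun b => lam' b * v b m) / v a0 m).
      exists (fun a => if Nat.eq_dec a a0 then c0 else lam' a). split; [|split].
      * intros a. destruct (Nat.eq_dec a a0); auto. unfold c0. apply Qr_div; auto.
        apply Qr_opp. apply Qr_lsum. intros; apply Qr_mult; auto.
      * apply in_remove in Ha1 as [Ha1 Hne]. exists a1. split; auto.
        destruct (Nat.eq_dec a1 a0); [congruence|auto].
      * intros j Hj. rewrite (lsum_remove s a0) by auto. fold s'.
        destruct (Nat.eq_dec a0 a0) as [_|]; [|congruence].
        rewrite (lsum_ext s' _ (fun a => lam' a * v a j)).
        2: { intros a Ha. apply in_remove in Ha as [_ Hne]. destruct (Nat.eq_dec a a0); [congruence|auto]. }
        unfold c0.
        destruct (Nat.eq_dec j m) as [->|Hjm].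
        -- field. auto.
        -- assert (Hj' : (j < m)%nat) by lia. specialize (Hs j Hj'). unfold w in Hs.
           rewrite (lsum_ext s' (fun a => lam' a * v a j) (fun a => (lam' a * (v a j - v a m / v a0 m * v a0 j)) + (v a0 j / v a0 m) * (lam' a * v a m))) .
           2: { intros a _. field. auto. }
           rewrite lsum_plus, lsum_scal, Hs. field. auto.
    + destruct (IHm s v Hn Hv) as [lam [Hq [Hnz Hs]]]; [lia|].
      exists lam. split; [|split]; auto. intros j Hj.
      destruct (Nat.eq_dec j m) as [->|Hjm].
      * apply lsum_zero. intros a Ha. destruct (Req_dec (v a m) 0) as [E|E].
        -- rewrite E; ring.
        -- exfalso. apply Hno. exists a. auto.
      * apply Hs. lia.
Qed.


Definition psi (q : nat) : R := PI / INR q.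
Definition G (q k : nat) : R :=
  if Nat.ltb k (2*q) then cos (INR k * psi q) else sin (INR (k - 2*q) * psi q).
Definition InV (q : nat) (y : R) : Prop :=
  exists c : nat -> R, (forall k, Qr (c k)) /\ y = sumN (4*q) (fun k => c k * G q k).

Lemma InV_0 q : InV q 0.
Proof. exists (fun _ => 0). split; [intros; apply Qr_0|]. symmetry. apply sumN_zero. intros; ring. Qed.
Lemma InV_plus q x y : InV q x -> InV q y -> InV q (x + y).
Proof. intros [c [Hc ->]] [d [Hd ->]]. exists (fun k => c k + d k). split; [intros; apply Qr_plus; auto|].
  rewrite <- sumN_plus. apply sumN_ext. intros; ring. Qed.
Lemma InV_scal q r x : Qr r -> InV q x -> InV q (r * x).
Proof. intros Hr [c [Hc ->]]. exists (fun k => r * c k). split; [intros; apply Qr_mult; auto|].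
  rewrite <- sumN_scal. apply sumN_ext. intros; ring. Qed.
Lemma InV_gen q k : (k < 4*q)%nat -> InV q (G q k).
Proof. intros Hk. exists (fun j => if Nat.eq_dec j k then 1 else 0). split.
  - intros j. destruct (Nat.eq_dec j k); [apply Qr_1|apply Qr_0].
  - clear -Hk. revert Hk. generalize (4*q)%nat. induction n; intros Hk; [lia|].
    cbn [sumN]. destruct (Nat.eq_dec n k) as [->|Hne].
    + rewrite sumN_zero. ring. intros j Hj. destruct (Nat.eq_dec j k); [lia|ring].
    + rewrite <- IHn by lia. ring. Qed.
Lemma InV_sumN q m g : (forall k, (k < m)%nat -> InV q (g k)) -> InV q (sumN m g).
Proof. induction m; intros H; cbn [sumN]; [apply InV_0|]. apply InV_plus; auto. Qed.

Lemma InV_cos q z : (1 <= q)%nat -> InV q (cos (INR z * psi q)).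
Proof. intros Hq.
  assert (Hq0 : 0 < INR q) by (apply lt_0_INR; lia).
  pose proof (Nat.div_mod z (2*q) ltac:(lia)) as Hz. pose proof (Nat.mod_upper_bound z (2*q) ltac:(lia)) as Hr.
  set (t := (z / (2*q))%nat) in *. set (r := (z mod (2*q))%nat) in *.
  assert (E : INR z * psi q = INR r * psi q + 2 * INR t * PI).
  { rewrite Hz, plus_INR, !mult_INR. unfold psi. cbn [INR]. field. lra. }
  rewrite E, cos_period.
  replace (cos (INR r * psi q)) with (G q r). apply InV_gen; lia.
  unfold G. destruct (Nat.ltb_spec r (2*q)); [auto|lia]. Qed.

Lemma InV_sin q z : (1 <= q)%nat -> InV q (sin (INR z * psi q)).
Proof. intros Hq.
  assert (Hq0 : 0 < INR q) by (apply lt_0_INR; lia).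
  pose proof (Nat.div_mod z (2*q) ltac:(lia)) as Hz. pose proof (Nat.mod_upper_bound z (2*q) ltac:(lia)) as Hr.
  set (t := (z / (2*q))%nat) in *. set (r := (z mod (2*q))%nat) in *.
  assert (E : INR z * psi q = INR r * psi q + 2 * INR t * PI).
  { rewrite Hz, plus_INR, !mult_INR. unfold psi. cbn [INR]. field. lra. }
  rewrite E, sin_period.
  replace (sin (INR r * psi q)) with (G q (r + 2*q)). apply InV_gen; lia.
  unfold G. destruct (Nat.ltb_spec (r + 2*q) (2*q)); [lia|]. f_equal. f_equal. f_equal. lia. Qed.

Lemma InV_cos_d q j k : (1 <= q)%nat -> InV q (cos ((INR j - INR k) * psi q)).
Proof. intros Hq. destruct (le_lt_dec k j).
  - rewrite <- minus_INR by auto. apply InV_cos; auto.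
  - replace ((INR j - INR k) * psi q) with (- (INR (k - j) * psi q)) by (rewrite minus_INR by lia; ring).
    rewrite cos_neg. apply InV_cos; auto. Qed.
Lemma InV_sin_d q j k : (1 <= q)%nat -> InV q (sin ((INR j - INR k) * psi q)).
Proof. intros Hq. destruct (le_lt_dec k j).
  - rewrite <- minus_INR by auto. apply InV_sin; auto.
  - replace ((INR j - INR k) * psi q) with (- (INR (k - j) * psi q)) by (rewrite minus_INR by lia; ring).
    rewrite sin_neg. replace (- sin (INR (k - j) * psi q)) with ((-1) * sin (INR (k - j) * psi q)) by ring.
    apply InV_scal; [apply Qr_opp, Qr_1|apply InV_sin; auto]. Qed.

Definition Mq (q : nat) (x : R) : Prop := forall y, InV q y -> InV q (x * y).

Lemma Mq_gen q x : (forall k, (k < 4*q)%nat -> InV q (x * G q k)) -> Mq q x.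
Proof. intros H y [c [Hc ->]]. rewrite <- sumN_scal. apply InV_sumN. intros k Hk.
  replace (x * (c k * G q k)) with (c k * (x * G q k)) by ring. apply InV_scal; auto. Qed.

Lemma Mq_plus q x y : Mq q x -> Mq q y -> Mq q (x + y).
Proof. intros Hx Hy z Hz. rewrite Rmult_plus_distr_r. apply InV_plus; auto. Qed.
Lemma Mq_mult q x y : Mq q x -> Mq q y -> Mq q (x * y).
Proof. intros Hx Hy z Hz. rewrite Rmult_assoc. auto. Qed.
Lemma Mq_scal q r x : Qr r -> Mq q x -> Mq q (r * x).
Proof. intros Hr Hx z Hz. rewrite Rmult_assoc. apply InV_scal; auto. Qed.
Lemma Mq_sumN q m g : (forall k, (k < m)%nat -> Mq q (g k)) -> Mq q (sumN m g).
Proof. induction m; intros H; cbn [sumN].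
  - intros z Hz. rewrite Rmult_0_l. apply InV_0.
  - apply Mq_plus; auto. Qed.

Lemma Mq_cos q j : (1 <= q)%nat -> Mq q (cos (INR j * psi q)).
Proof. intros Hq. apply Mq_gen. intros k Hk. unfold G. destruct (Nat.ltb k (2*q)).
  - set (k' := k). replace (cos (INR j * psi q) * cos (INR k' * psi q))
      with (/2 * cos (INR (j + k') * psi q) + /2 * cos ((INR j - INR k') * psi q)).
    + apply InV_plus; apply InV_scal; try apply Qr_inv; try apply (Qr_IZR 2).
      apply InV_cos; auto. apply InV_cos_d; auto.
    + rewrite plus_INR. replace ((INR j + INR k') * psi q) with (INR j * psi q + INR k' * psi q) by ring.
      replace ((INR j - INR k') * psi q) with (INR j * psi q - INR k' * psi q) by ring.
      rewrite cos_plus, cos_minus. field.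
  - set (k' := (k - 2*q)%nat). replace (cos (INR j * psi q) * sin (INR k' * psi q))
      with (/2 * sin (INR (j + k') * psi q) + (-/2) * sin ((INR j - INR k') * psi q)).
    + apply InV_plus; apply InV_scal; try apply Qr_opp; try apply Qr_inv; try apply (Qr_IZR 2).
      apply InV_sin; auto. apply InV_sin_d; auto.
    + rewrite plus_INR. replace ((INR j + INR k') * psi q) with (INR j * psi q + INR k' * psi q) by ring.
      replace ((INR j - INR k') * psi q) with (INR j * psi q - INR k' * psi q) by ring.
      rewrite sin_plus, sin_minus. field.
Qed.

Lemma Mq_sin q j : (1 <= q)%nat -> Mq q (sin (INR j * psi q)).
Proof. intros Hq. apply Mq_gen. intros k Hk. unfold G. destruct (Nat.ltb k (2*q)).
  - set (k' := k). replace (sin (INR j * psi q) * cos (INR k' * psi q))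
      with (/2 * sin (INR (j + k') * psi q) + /2 * sin ((INR j - INR k') * psi q)).
    + apply InV_plus; apply InV_scal; try apply Qr_inv; try apply (Qr_IZR 2).
      apply InV_sin; auto. apply InV_sin_d; auto.
    + rewrite plus_INR. replace ((INR j + INR k') * psi q) with (INR j * psi q + INR k' * psi q) by ring.
      replace ((INR j - INR k') * psi q) with (INR j * psi q - INR k' * psi q) by ring.
      rewrite sin_plus, sin_minus. field.
  - set (k' := (k - 2*q)%nat). replace (sin (INR j * psi q) * sin (INR k' * psi q))
      with (/2 * cos ((INR j - INR k') * psi q) + (-/2) * cos (INR (j + k') * psi q)).
    + apply InV_plus; apply InV_scal; try apply Qr_opp; try apply Qr_inv; try apply (Qr_IZR 2).
      apply InV_cos_d; auto. apply InV_cos; auto.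
    + rewrite plus_INR. replace ((INR j + INR k') * psi q) with (INR j * psi q + INR k' * psi q) by ring.
      replace ((INR j - INR k') * psi q) with (INR j * psi q - INR k' * psi q) by ring.
      rewrite cos_plus, cos_minus. field.
Qed.

Lemma T1 th M : 2 * sin th * sumN M (fun m => cos (2 * INR m * th)) = sin ((2 * INR M - 1) * th) + sin th.
Proof. induction M; cbn [sumN].
  - cbn [INR]. replace ((2*0-1)*th) with (- th) by ring. rewrite sin_neg. ring.
  - rewrite S_INR. rewrite Rmult_plus_distr_l, IHM.
    replace ((2 * (INR M + 1) - 1) * th) with (2 * INR M * th + th) by ring.
    replace ((2 * INR M - 1) * th) with (2 * INR M * th - th) by ring.
    rewrite sin_plus, sin_minus. ring. Qed.

Lemma T2 th M : 2 * sin th * sumN M (fun m => INR m * sin ((2 * INR m + 1) * th))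
  = sumN M (fun m => cos (2 * INR m * th)) - 1 - (INR M - 1) * cos (2 * INR M * th).
Proof. induction M; cbn [sumN].
  - cbn [INR]. replace (2*0*th) with 0 by ring. rewrite cos_0. ring.
  - rewrite S_INR. rewrite Rmult_plus_distr_l, IHM.
    replace (2 * (INR M + 1) * th) with ((2 * INR M + 1) * th + th) by ring.
    replace (2 * INR M * th) with ((2 * INR M + 1) * th - th) by ring.
    rewrite cos_plus, cos_minus. ring. Qed.

Definition cotq (q b : nat) : R := cos (PI * INR b / INR q) / sin (PI * INR b / INR q).

Lemma cot_expand q b : (0 < b < q)%nat ->
  cotq q b = sumN q (fun m => (-2 * INR m / INR q) * (cos (INR b * psi q) * sin (INR ((2*m+1)*b) * psi q))).
Proof. intros Hb.
  assert (Hq0 : 0 < INR q) by (apply lt_0_INR; lia).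
  assert (Hbq : INR b < INR q) by (apply lt_INR; lia).
  assert (Hb0 : 0 < INR b) by (apply lt_0_INR; lia).
  set (th := INR b * psi q).
  assert (Eth : PI * INR b / INR q = th) by (unfold th, psi; field; lra).
  unfold cotq. rewrite Eth.
  pose proof PI_RGT_0.
  assert (Hs : 0 < sin th).
  { apply sin_gt_0; unfold th, psi.
    - apply Rmult_lt_0_compat; auto. apply Rdiv_lt_0_compat; auto.
    - apply Rmult_lt_reg_r with (INR q); auto. unfold Rdiv. rewrite Rmult_assoc, (Rmult_assoc PI), Rinv_l by lra. nra. }
  rewrite (sumN_ext q _ (fun m => (-2 / INR q * cos th) * (INR m * sin ((2 * INR m + 1) * th)))).
  2: { intros m _. rewrite mult_INR, plus_INR, mult_INR. cbn [INR].
       replace (((1+1) * INR m + 1) * INR b * psi q) with ((2 * INR m + 1) * th) by (unfold th; ring).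
       fold th. unfold Rdiv. ring. }
  rewrite sumN_scal.
  pose proof (T1 th q) as E1. pose proof (T2 th q) as E2.
  assert (C1 : sin ((2 * INR q - 1) * th) = - sin th).
  { replace ((2 * INR q - 1) * th) with (- th + 2 * INR b * PI) by (unfold th, psi; field; lra).
    rewrite sin_period, sin_neg. auto. }
  assert (C2 : cos (2 * INR q * th) = 1).
  { replace (2 * INR q * th) with (0 + 2 * INR b * PI) by (unfold th, psi; field; lra).
    rewrite cos_period, cos_0. auto. }
  rewrite C1 in E1. rewrite C2 in E2.
  assert (S0 : sumN q (fun m => cos (2 * INR m * th)) = 0).
  { apply Rmult_eq_reg_l with (2 * sin th); [|lra]. rewrite E1. ring. }
  rewrite S0 in E2.
  assert (S1 : sumN q (fun m => INR m * sin ((2 * INR m + 1) * th)) = - INR q / (2 * sin th)).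
  { apply Rmult_eq_reg_l with (2 * sin th); [|lra]. rewrite E2. field. lra. }
  rewrite S1. field. split; lra.
Qed.

Lemma Mq_cot q b : (0 < b < q)%nat -> Mq q (cotq q b).
Proof. intros Hb. rewrite cot_expand by auto. apply Mq_sumN. intros m Hm.
  apply Mq_scal.
  - apply Qr_div; [apply Qr_mult; [apply (Qr_IZR (-2))|apply Qr_INR]|apply Qr_INR].
  - apply Mq_mult; [apply Mq_cos|apply Mq_sin]; lia.
Qed.

Inductive CS (q : nat) : R -> Prop :=
| CS_cot b : (0 < b < q)%nat -> CS q (cotq q b)
| CS_plus x y : CS q x -> CS q y -> CS q (x + y)
| CS_scal r x : Qr r -> CS q x -> CS q (r * x).

Lemma CS_Mq q x : CS q x -> Mq q x.
Proof. induction 1. - apply Mq_cot; auto. - apply Mq_plus; auto. - apply Mq_scal; auto. Qed.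

Lemma InV_one q : (1 <= q)%nat -> InV q 1.
Proof. intros Hq. replace 1 with (cos (INR 0 * psi q)) by (cbn [INR]; rewrite Rmult_0_l; apply cos_0).
  apply InV_cos; auto. Qed.

Lemma pow_InV q x : (1 <= q)%nat -> Mq q x -> forall i, InV q (x ^ i).
Proof. intros Hq Hx i. induction i; cbn [pow]; [apply InV_one; auto|apply Hx; auto]. Qed.

Lemma sumN_shift n g : sumN (S n) g = g 0%nat + sumN n (fun t => g (S t)).
Proof. induction n; cbn [sumN] in *; [ring|]. rewrite IHn. ring. Qed.

Lemma lsum_seq k n g : lsum (seq k n) g = sumN n (fun t => g (k + t)%nat).
Proof. revert k. induction n; intros k; cbn [seq lsum]; [auto|].
  rewrite IHn, sumN_shift. rewrite Nat.add_0_r. f_equal. apply sumN_ext. intros. f_equal. lia. Qed.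

Definition hornerR (l : list Z) (x : R) : R := fold_right (fun c acc => IZR c + x * acc) 0 l.

Lemma Cpoly_real l x : Cpoly_eval l (x, 0) = (hornerR l x, 0).
Proof. induction l; cbn [Cpoly_eval fold_right hornerR]; [auto|].
  unfold Cpoly_eval in IHl. rewrite IHl. unfold Cadd, Cmul, RtoC. cbn [fst snd]. fold (hornerR l x). f_equal; ring. Qed.

Lemma horner_seq zf k n x : hornerR (map zf (seq k n)) x = sumN n (fun t => IZR (zf (k + t)%nat) * x ^ t).
Proof. revert k. induction n; intros k; cbn [seq map hornerR fold_right]; [auto|].
  fold (hornerR (map zf (seq (S k) n)) x). rewrite IHn, sumN_shift. rewrite Nat.add_0_r.
  cbn [pow]. rewrite Rmult_1_r. f_equal. rewrite <- sumN_scal. apply sumN_ext. intros t _.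
  replace (S k + t)%nat with (k + S t)%nat by lia. cbn [pow]. ring. Qed.

Lemma clear_denoms s (lam : nat -> R) : (forall a, Qr (lam a)) ->
  exists (D : Z) (zf : nat -> Z), D <> 0%Z /\ forall a, In a s -> IZR D * lam a = IZR (zf a).
Proof. intros Hq. induction s as [|a s IH].
  - exists 1%Z, (fun _ => 0%Z). split; [lia|intros a []].
  - destruct IH as [D [zf [HD Hz]]]. destruct (Hq a) as [p [d [Hd Ha]]].
    exists (d * D)%Z, (fun b => if Nat.eq_dec b a then (p * D)%Z else (zf b * d)%Z). split; [lia|].
    intros b Hb. destruct (Nat.eq_dec b a) as [->|Hne].
    + rewrite Ha, !mult_IZR. apply not_0_IZR in Hd. field. auto.
    + destruct Hb as [->|Hb]; [congruence|]. rewrite !mult_IZR, <- Hz by auto. ring.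
Qed.

Lemma Mq_alg q x : (1 <= q)%nat -> Mq q x -> algebraic (x, 0).
Proof. intros Hq Hx.
  assert (H : forall i, exists c : nat -> R, (forall k, Qr (c k)) /\ x ^ i = sumN (4*q) (fun k => c k * G q k))
    by (intros i; apply pow_InV; auto).
  set (CP := fun i => proj1_sig (constructive_indefinite_description _ (H i))).
  assert (HCP : forall i, (forall k, Qr (CP i k)) /\ x ^ i = sumN (4*q) (fun k => CP i k * G q k))
    by (intros i; unfold CP; destruct (constructive_indefinite_description _ (H i)); auto).
  set (s := seq 0 (S (4*q))).
  destruct (dep (4*q) s (fun i k => CP i k)) as [lam [Hl [[i0 [Hi0 Hnz]] Hsum]]].
  { apply seq_NoDup. } { intros; apply HCP. } { unfold s; rewrite length_seq; lia. }
  assert (Z0 : lsum s (fun i => lam i * x ^ i) = 0).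
  { rewrite (lsum_ext s _ (fun i => sumN (4*q) (fun k => lam i * CP i k * G q k))).
    2: { intros i _. rewrite (proj2 (HCP i)). rewrite <- sumN_scal. apply sumN_ext. intros; ring. }
    rewrite lsum_sumN. apply sumN_zero. intros k Hk.
    rewrite (lsum_ext s _ (fun i => G q k * (lam i * CP i k))) by (intros; ring).
    rewrite lsum_scal, Hsum by auto. ring. }
  destruct (clear_denoms s lam Hl) as [D [zf [HD Hz]]].
  exists (map zf s). split.
  - apply Exists_exists. exists (zf i0). split; [apply in_map; auto|].
    intros E. specialize (Hz i0 Hi0). rewrite E in Hz. cbn in Hz. apply not_0_IZR in HD.
    apply Rmult_integral in Hz. tauto.
  - rewrite Cpoly_real. unfold s. rewrite horner_seq. unfold C0. f_equal.
    unfold s in Z0. rewrite lsum_seq in Z0.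
    transitivity (IZR D * sumN (S (4*q)) (fun t => lam (0 + t)%nat * x ^ t)).
    + rewrite <- sumN_scal. apply sumN_ext. intros t Ht. rewrite <- Hz.
      * cbn [Nat.add]. ring.
      * apply in_seq. lia.
    + rewrite (sumN_ext _ _ (fun t => lam (0 + t)%nat * x ^ (0 + t)%nat)) by auto. rewrite Z0. ring.
Qed.

Lemma CS_alg q x : (1 <= q)%nat -> CS q x -> algebraic (x, 0).
Proof. intros. apply Mq_alg with q; auto. apply CS_Mq; auto. Qed.


Definition gen (f : nat) (Hv : nat -> R) (j : nat) : R :=
  if Nat.eqb j 0 then 1 else if Nat.eqb j 1 then Kc f Hv else Hv (j - 1)%nat.

Definition SpanG (f : nat) (Hv : nat -> R) (y : R) : Prop :=
  exists c : nat -> R, (forall j, Qr (c j)) /\ exists b, CS (4*f) b /\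
    y = sumN (S f) (fun j => c j * gen f Hv j) + b * PI.

Lemma CS_zero f : (1 <= f)%nat -> CS (4*f) 0.
Proof. intros Hf. replace 0 with (0 * cotq (4*f) f) by ring. apply CS_scal; [apply Qr_0|]. apply CS_cot. lia. Qed.

Lemma SpanG_plus f Hv x y : SpanG f Hv x -> SpanG f Hv y -> SpanG f Hv (x + y).
Proof. intros [c [Hc [b [Hb ->]]]] [d [Hd [e [He ->]]]].
  exists (fun j => c j + d j). split; [intros; apply Qr_plus; auto|]. exists (b + e). split; [apply CS_plus; auto|].
  rewrite (sumN_ext _ (fun j => (c j + d j) * gen f Hv j) (fun j => c j * gen f Hv j + d j * gen f Hv j)) by (intros; ring).
  rewrite sumN_plus. ring. Qed.

Lemma SpanG_scal f Hv r x : Qr r -> SpanG f Hv x -> SpanG f Hv (r * x).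
Proof. intros Hr [c [Hc [b [Hb ->]]]].
  exists (fun j => r * c j). split; [intros; apply Qr_mult; auto|]. exists (r * b). split; [apply CS_scal; auto|].
  rewrite (sumN_ext _ (fun j => (r * c j) * gen f Hv j) (fun j => r * (c j * gen f Hv j))) by (intros; ring).
  rewrite sumN_scal. ring. Qed.

Lemma SpanG_gen f Hv j : (1 <= f)%nat -> (j < S f)%nat -> SpanG f Hv (gen f Hv j).
Proof. intros Hf Hj. exists (fun i => if Nat.eq_dec i j then 1 else 0). split.
  - intros i. destruct (Nat.eq_dec i j); [apply Qr_1|apply Qr_0].
  - exists 0. split; [apply CS_zero; auto|]. rewrite Rmult_0_l, Rplus_0_r.
    clear Hf. revert Hj. generalize (S f). induction n; intros Hk; [lia|].
    cbn [sumN]. destruct (Nat.eq_dec n j) as [->|Hne].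
    + rewrite sumN_zero. ring. intros i Hi. destruct (Nat.eq_dec i j); [lia|ring].
    + rewrite <- IHn by lia. ring. Qed.

Lemma SpanG_const f Hv r : (1 <= f)%nat -> Qr r -> SpanG f Hv r.
Proof. intros Hf Hr. replace r with (r * gen f Hv 0) by (unfold gen; cbn; ring).
  apply SpanG_scal; auto. apply SpanG_gen; lia. Qed.

Lemma SpanG_K f Hv : (1 <= f)%nat -> SpanG f Hv (Kc f Hv).
Proof. intros Hf. replace (Kc f Hv) with (gen f Hv 1) by (unfold gen; cbn; auto). apply SpanG_gen; lia. Qed.

Lemma SpanG_small f Hv e : (1 <= e < f)%nat -> SpanG f Hv (Hv e).
Proof. intros He. replace (Hv e) with (gen f Hv (S e)).
  - apply SpanG_gen; lia.
  - unfold gen. destruct (Nat.eqb_spec (S e) 0); [lia|]. destruct (Nat.eqb_spec (S e) 1); [lia|].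
    f_equal. lia. Qed.

Lemma SpanG_cot f Hv a : (1 <= a < 4*f)%nat -> SpanG f Hv (PI * cot (PI * INR a / INR (4*f))).
Proof. intros Ha. exists (fun _ => 0). split; [intros; apply Qr_0|].
  exists (cotq (4*f) a). split; [apply CS_cot; lia|].
  rewrite sumN_zero by (intros; ring). unfold cot, cotq. ring. Qed.

Lemma Qr_ratio m n : Qr (INR m / INR n).
Proof. apply Qr_div; apply Qr_INR. Qed.

Lemma SpanG_lin f Hv y u w r1 r2 : SpanG f Hv u -> SpanG f Hv w -> Qr r1 -> Qr r2 ->
  y = r1 * u + r2 * w -> SpanG f Hv y.
Proof. intros Hu Hw H1 H2 ->. apply SpanG_plus; apply SpanG_scal; auto. Qed.

Lemma base_case f Hv : (1 <= f)%nat -> Hyp f Hv ->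
  forall a, (1 <= a <= 4*f)%nat -> Nat.divide f a -> SpanG f Hv (Hv a).
Proof. intros Hf H a Ha [t ->].
  assert (H4 : SpanG f Hv (Hv (4*f)%nat)) by (rewrite H_one by auto; apply SpanG_const; auto; apply Qr_1).
  assert (H2 : SpanG f Hv (Hv (2*f)%nat)).
  { apply SpanG_lin with (Hv (4*f)%nat + 1) (Kc f Hv) 1 (-2).
    - apply SpanG_plus; auto. apply SpanG_const; auto; apply Qr_1.
    - apply SpanG_K; auto.
    - apply Qr_1. - apply (Qr_IZR (-2)).
    - unfold Kc. lra. }
  assert (D1 := dup_rel f Hv f Hf H ltac:(lia)).
  assert (R1 := refl_rel f Hv f Hf H ltac:(lia)).
  replace (4*f - f)%nat with (3*f)%nat in R1 by lia.
  replace (f + 2*f)%nat with (3*f)%nat in D1 by lia.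
  assert (C := SpanG_cot f Hv f ltac:(lia)).
  set (cc := PI * cot (PI * INR f / INR (4 * f))) in *.
  assert (H1 : SpanG f Hv (Hv f)).
  { apply SpanG_lin with (Hv (2*f)%nat - Kc f Hv + INR (4*f)/INR (2*f + 4*f)
          + /2 * (INR (4*f)/INR f) - /2 * (INR (4*f) / INR (3*f))) cc 1 (-/2).
    - apply SpanG_plus; [apply SpanG_plus; [apply SpanG_plus; [apply SpanG_plus|]|]|].
      + auto.
      + replace (- Kc f Hv) with (-1 * Kc f Hv) by ring. apply SpanG_scal; [apply Qr_opp, Qr_1|apply SpanG_K; auto].
      + apply SpanG_const; auto. apply Qr_ratio.
      + apply SpanG_const; auto. apply Qr_mult; [apply Qr_inv, (Qr_IZR 2)|apply Qr_ratio].
      + replace (- (/2 * (INR (4*f) / INR (3*f)))) with (-1 * (/2 * (INR (4*f) / INR (3*f)))) by ring.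
        apply SpanG_const; auto. apply Qr_mult; [apply Qr_opp, Qr_1|]. apply Qr_mult; [apply Qr_inv, (Qr_IZR 2)|apply Qr_ratio].
    - auto.
    - apply Qr_1. - apply Qr_opp, Qr_inv, (Qr_IZR 2).
    - lra. }
  assert (H3 : SpanG f Hv (Hv (3*f)%nat)).
  { rewrite R1. apply SpanG_plus; auto. apply SpanG_plus; [apply SpanG_plus; auto|].
    - replace (- (INR (4*f) / INR f)) with (-1 * (INR (4*f) / INR f)) by ring.
      apply SpanG_const; auto. apply Qr_mult; [apply Qr_opp, Qr_1|apply Qr_ratio].
    - apply SpanG_const; auto. apply Qr_ratio. }
  assert (Ht : (t = 1 \/ t = 2 \/ t = 3 \/ t = 4)%nat) by nia.
  destruct Ht as [ -> | [ -> | [ -> | -> ] ] ].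
  - replace (1*f)%nat with f by lia. auto.
  -  auto.
  - auto.
  - auto.
Qed.

Lemma Qr_nratio_neg m n : Qr (- (INR m / INR n)).
Proof. apply Qr_opp, Qr_ratio. Qed.

Lemma dup_expr f Hv a' : (1 <= f)%nat -> Hyp f Hv -> (1 <= a' < f)%nat ->
  SpanG f Hv (Hv (2*a')%nat) -> SpanG f Hv (Hv (a' + 2*f)%nat).
Proof. intros Hf H Ha H2.
  pose proof (dup_rel f Hv a' Hf H ltac:(lia)) as D.
  apply SpanG_lin with (Hv (2*a')%nat - /2 * Hv a' - Kc f Hv + INR (4*f) / INR (2*a' + 4*f)) 1 2 0.
  - apply SpanG_plus; [apply SpanG_plus; [apply SpanG_plus|]|]; auto.
    + replace (- (/2 * Hv a')) with ((-/2) * Hv a') by ring. apply SpanG_scal; [apply Qr_opp, Qr_inv, (Qr_IZR 2)|].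
      apply SpanG_small; lia.
    + replace (- Kc f Hv) with (-1 * Kc f Hv) by ring. apply SpanG_scal; [apply Qr_opp, Qr_1|apply SpanG_K; auto].
    + apply SpanG_const; auto. apply Qr_ratio.
  - apply SpanG_const; auto. apply Qr_1.
  - apply (Qr_IZR 2). - apply Qr_0.
  - lra.
Qed.

Lemma refl_expr f Hv c : (1 <= f)%nat -> Hyp f Hv -> (1 <= c < 4*f)%nat ->
  SpanG f Hv (Hv c) -> SpanG f Hv (Hv (4*f - c)%nat).
Proof. intros Hf H Hc Hs. rewrite refl_rel by auto.
  apply SpanG_plus; [apply SpanG_plus; [apply SpanG_plus|]|]; auto.
  - apply SpanG_const; auto. apply Qr_nratio_neg.
  - apply SpanG_const; auto. apply Qr_ratio.
  - apply SpanG_cot. lia.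
Qed.

Lemma refl_expr' f Hv c : (1 <= f)%nat -> Hyp f Hv -> (1 <= c < 4*f)%nat ->
  SpanG f Hv (Hv (4*f - c)%nat) -> SpanG f Hv (Hv c).
Proof. intros Hf H Hc Hs. pose proof (refl_rel f Hv c Hf H Hc) as R.
  apply SpanG_lin with (Hv (4*f - c)%nat + INR (4*f)/INR c - INR (4*f) / INR (4*f - c))
    (PI * cot (PI * INR c / INR (4*f))) 1 (-1).
  - apply SpanG_plus; [apply SpanG_plus|]; auto.
    + apply SpanG_const; auto. apply Qr_ratio.
    + apply SpanG_const; auto. apply Qr_nratio_neg.
  - apply SpanG_cot. lia.
  - apply Qr_1. - apply Qr_opp, Qr_1.
  - lra.
Qed.

Lemma step_case f Hv p Q : (1 <= f)%nat -> Hyp f Hv -> (2 <= Q)%nat -> Nat.Even Q -> f = (Q * p)%nat ->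
  (forall a, (1 <= a <= 4*f)%nat -> Nat.divide (2*p) a -> SpanG f Hv (Hv a)) ->
  forall a, (1 <= a <= 4*f)%nat -> Nat.divide p a -> SpanG f Hv (Hv a).
Proof. intros Hf H HQ [w Hw] Hfp IH a Ha [t Ht].
  assert (Hp : (1 <= p)%nat) by nia.
  destruct (Nat.Even_or_Odd t) as [[u Hu]|[u Hu]].
  - apply IH; auto. exists u. subst. lia.
  - subst t. subst Q.
    assert (Hc : (2*u+1 < 2*w \/ (2*w < 2*u+1 < 4*w) \/ (4*w < 2*u+1 < 6*w) \/ (6*w < 2*u+1 < 8*w))%nat) by nia.
    destruct Hc as [Hc|[Hc|[Hc|Hc]]].
    + apply SpanG_small. nia.
    +
      set (a' := ((4*w - (2*u+1)) * p)%nat).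
      assert (Ha' : (1 <= a' < f)%nat) by (unfold a'; nia).
      assert (E : a = (4*f - (a' + 2*f))%nat) by (unfold a'; nia).
      rewrite E. apply refl_expr; auto; [lia|].
      apply dup_expr; auto. apply IH; [lia|]. exists (4*w - (2*u+1))%nat. unfold a'. nia.
    + set (a' := ((2*u+1 - 4*w) * p)%nat).
      assert (Ha' : (1 <= a' < f)%nat) by (unfold a'; nia).
      assert (E : a = (a' + 2*f)%nat) by (unfold a'; nia).
      rewrite E. apply dup_expr; auto. apply IH; [lia|]. exists (2*u+1 - 4*w)%nat. unfold a'. nia.
    + set (c := (4*f - a)%nat).
      assert (Hc' : (1 <= c < f)%nat) by (unfold c; nia).
      assert (E : a = (4*f - c)%nat) by (unfold c; lia).
      rewrite E. apply refl_expr; auto; [lia|]. apply SpanG_small; auto.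
Qed.

Lemma span_all m Hv : Hyp (2^m) Hv ->
  forall a, (1 <= a <= 4*2^m)%nat -> SpanG (2^m) Hv (Hv a).
Proof. intros H.
  assert (Hf : (1 <= 2^m)%nat) by (apply Nat.le_succ_l, Nat.neq_0_lt_0, Nat.pow_nonzero; lia).
  assert (K : forall k, (k <= m)%nat -> forall a, (1 <= a <= 4*2^m)%nat -> Nat.divide (2^(m-k)) a -> SpanG (2^m) Hv (Hv a)).
  { induction k; intros Hk a Ha Hd.
    - rewrite Nat.sub_0_r in Hd. apply base_case; auto.
    - apply (step_case (2^m) Hv (2^(m - S k)) (2^(S k))); auto.
      + cbn [Nat.pow]. assert (1 <= 2^k)%nat by (apply Nat.le_succ_l, Nat.neq_0_lt_0, Nat.pow_nonzero; lia). lia.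
      + exists (2^k)%nat. cbn [Nat.pow]. lia.
      + rewrite <- Nat.pow_add_r. f_equal. lia.
      + intros b Hb Hdb. apply IHk; [lia|auto|]. replace (m - k)%nat with (S (m - S k)) by lia. cbn [Nat.pow]. auto. }
  intros a Ha. apply (K m); auto. rewrite Nat.sub_diag. cbn. apply Nat.divide_1_l.
Qed.


Lemma gcd_pow2_odd k x : Nat.Odd x -> Nat.gcd x (2^k) = 1%nat.
Proof. intros Hx. induction k.
  - cbn [Nat.pow]. apply Nat.divide_1_r. apply Nat.gcd_divide_r.
  - set (d := Nat.gcd x (2^S k)).
    assert (Hdx : Nat.divide d x) by apply Nat.gcd_divide_l.
    assert (Hd2 : Nat.divide d (2 * 2^k)) by apply Nat.gcd_divide_r.
    assert (Hg : Nat.gcd d 2 = 1%nat).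
    { assert (G2 : Nat.divide (Nat.gcd d 2) 2) by apply Nat.gcd_divide_r.
      assert (Gd : Nat.divide (Nat.gcd d 2) d) by apply Nat.gcd_divide_l.
      apply Nat.divide_pos_le in G2; [|lia].
      destruct (Nat.gcd d 2) as [|[|[|g]]] eqn:E; try lia.
      - apply Nat.gcd_eq_0 in E. lia.
      - exfalso. assert (Nat.divide 2 x) by (eapply Nat.divide_trans; eauto).
        destruct H as [z Hz]. destruct Hx as [y Hy]. lia. }
    assert (Nat.divide d (2^k)) by (apply (Nat.gauss d 2); auto).
    assert (Nat.divide d (Nat.gcd x (2^k))) by (apply Nat.gcd_greatest; auto).
    rewrite IHk in H0. apply Nat.divide_1_r in H0. auto.
Qed.

Lemma gcd_pow2_even k x : (1 <= k)%nat -> Nat.Even x -> Nat.gcd x (2^k) <> 1%nat.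
Proof. intros Hk [y Hy] E.
  assert (Nat.divide 2 (Nat.gcd x (2^k))).
  { apply Nat.gcd_greatest; [exists y; lia|]. exists (2^(k-1))%nat.
    destruct k as [|k']; [lia|]. replace (S k' - 1)%nat with k' by lia. cbn [Nat.pow]. lia. }
  rewrite E in H. apply Nat.divide_1_r in H. lia. Qed.

Lemma count_odd M : length (filter Nat.odd (seq 1 (2*M))) = M.
Proof. induction M; [auto|].
  replace (2 * S M)%nat with (2*M + 2)%nat by lia. rewrite seq_app, filter_app, length_app, IHM.
  cbn [seq filter]. replace (1 + 2*M)%nat with (S (2*M)) by lia.
  rewrite Nat.odd_succ, Nat.even_even. rewrite Nat.odd_succ_succ, <- Nat.negb_even, Nat.even_even.
  cbn. lia. Qed.

Lemma totient_pow2 k : (1 <= k)%nat -> totient (2^k) = (2^(k-1))%nat.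
Proof. intros Hk. unfold totient.
  rewrite (filter_ext_in _ Nat.odd).
  - assert (E : (2^k = 2 * 2^(k-1))%nat).
    { destruct k as [|k']; [lia|]. replace (S k' - 1)%nat with k' by lia. reflexivity. }
    rewrite E. apply count_odd.
  - intros x _. destruct (Nat.Even_or_Odd x) as [He|Ho].
    + pose proof (gcd_pow2_even k x Hk He). assert (Nat.odd x = false).
      { rewrite <- Nat.negb_even. apply Nat.even_spec in He. rewrite He. auto. }
      rewrite H0. apply Nat.eqb_neq. auto.
    + rewrite gcd_pow2_odd by auto. apply Nat.odd_spec in Ho. rewrite Ho. auto.
Qed.

Lemma Qr_alg x : Qr x -> algebraic (x, 0).
Proof. intros [z [d [Hd ->]]]. exists ((- z)%Z :: d :: nil). split.
  - apply Exists_cons_tl. apply Exists_cons_hd. auto.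
  - rewrite Cpoly_real. unfold C0. f_equal. cbn [hornerR fold_right]. rewrite opp_IZR.
    apply not_0_IZR in Hd. field. auto. Qed.

Lemma Clincomb_real s (r : nat -> R) x :
  Clincomb s (fun a => (r a, 0)) x = (lsum s (fun a => r a * x a), 0).
Proof. induction s; cbn [Clincomb fold_right lsum]; [auto|].
  unfold Clincomb in IHs. rewrite IHs. unfold Cadd, Cmul, RtoC. cbn [fst snd]. f_equal; ring. Qed.

Lemma CS_lsum q s g : (1 <= q)%nat -> (forall a, In a s -> CS (4*q) (g a)) -> CS (4*q) (lsum s g).
Proof. intros Hq. induction s; intros H; cbn [lsum].
  - apply CS_zero; auto.
  - apply CS_plus; [apply H; left; auto|apply IHs; intros; apply H; right; auto]. Qed.

Lemma span_sum f Hv s (CC : nat -> nat -> R) (BB : nat -> R) (w : nat -> R) :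
  (forall a, In a s -> Hv a = sumN (S f) (fun j => CC a j * gen f Hv j) + BB a * PI) ->
  (forall j, (j < S f)%nat -> lsum s (fun a => w a * CC a j) = 0) ->
  lsum s (fun a => w a * Hv a) = lsum s (fun a => w a * BB a) * PI.
Proof. intros HP Hw.
  rewrite (lsum_ext s (fun a => w a * Hv a)
     (fun a => sumN (S f) (fun j => gen f Hv j * (w a * CC a j)) + (w a * BB a) * PI)).
  2: { intros a Ha. rewrite (HP a Ha). rewrite Rmult_plus_distr_l, <- sumN_scal.
       f_equal; [apply sumN_ext; intros; ring|ring]. }
  rewrite lsum_plus, lsum_sumN.
  rewrite sumN_zero.
  2: { intros j Hj. rewrite lsum_scal, Hw by auto. ring. }
  rewrite (lsum_ext s (fun a => w a * BB a * PI) (fun a => PI * (w a * BB a))) by (intros; ring).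
  rewrite lsum_scal. ring.
Qed.

Theorem theorem3p5 (n : nat) (hn : (2 <= n)%nat) (Hv : nat -> R)
  (hH : forall a : nat, (1 <= a <= 2 ^ n)%nat ->
        is_H (INR a / INR (2 ^ n)) (Hv a)) :
  forall s : list nat,
    NoDup s ->
    (forall a, In a s -> (1 <= a <= 2 ^ n)%nat) ->
    (totient (totient (2 ^ n)) + 2 < length s)%nat ->
    exists c : nat -> Cx,
      (forall a, In a s -> algebraic (c a)) /\
      (exists a, In a s /\ c a <> C0) /\
      Clincomb s c Hv = C0.
Proof.
  intros s Hnd Hin Hlen.
  set (m := (n - 2)%nat). set (f := (2^m)%nat).
  assert (Hf : (1 <= f)%nat) by (apply Nat.le_succ_l, Nat.neq_0_lt_0, Nat.pow_nonzero; lia).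
  assert (E2 : (2^n = 4*f)%nat).
  { unfold f, m. replace n with ((n-2) + 2)%nat at 1 by lia. rewrite Nat.pow_add_r. cbn. lia. }
  assert (Htot : totient (totient (2^n)) = f).
  { rewrite totient_pow2 by lia. rewrite totient_pow2 by lia. unfold f, m. f_equal. lia. }
  rewrite Htot in Hlen.
  assert (H : Hyp f Hv).
  { intros a Ha. rewrite <- E2. apply hH. lia. }
  assert (Hspan : forall a, In a s -> SpanG f Hv (Hv a)).
  { intros a Ha. apply span_all; auto. specialize (Hin a Ha). fold f. lia. }
  assert (Ch : forall a, exists p : (nat -> R) * R, (forall j, Qr (fst p j)) /\
     (In a s -> CS (4*f) (snd p) /\ Hv a = sumN (S f) (fun j => fst p j * gen f Hv j) + snd p * PI)).
  { intros a. destruct (classic (In a s)) as [Ha|Ha].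
    - destruct (Hspan a Ha) as [c [Hc [b [Hb Eb]]]]. exists (c, b). cbn [fst snd]. auto.
    - exists ((fun _ => 0), 0). cbn [fst snd]. split; [intros; apply Qr_0|]. intros; contradiction. }
  set (P := fun a => proj1_sig (constructive_indefinite_description _ (Ch a))).
  assert (HP : forall a, (forall j, Qr (fst (P a) j)) /\
     (In a s -> CS (4*f) (snd (P a)) /\ Hv a = sumN (S f) (fun j => fst (P a) j * gen f Hv j) + snd (P a) * PI)).
  { intros a. unfold P. destruct (constructive_indefinite_description _ (Ch a)). auto. }
  set (CC := fun a j => fst (P a) j). set (BB := fun a => snd (P a)).
  assert (HCq : forall a j, Qr (CC a j)) by (intros; apply HP).
  assert (HBB : forall a, In a s -> CS (4*f) (BB a)) by (intros; apply HP; auto).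
  assert (HEq : forall a, In a s -> Hv a = sumN (S f) (fun j => CC a j * gen f Hv j) + BB a * PI)
    by (intros; apply HP; auto).
  destruct (dep (S f) s CC Hnd HCq ltac:(lia)) as [lam [Hlq [[a1 [Ha1 Hl1]] Hls]]].
  pose proof (remove_length_NoDup s a1 Hnd Ha1) as Hrl.
  destruct (dep (S f) (remove Nat.eq_dec a1 s) CC (NoDup_remove' s a1 Hnd) HCq ltac:(lia))
    as [mu0 [Hmq [[a2 [Ha2 Hm2]] Hms]]].
  apply in_remove in Ha2 as [Ha2 Ha21].
  set (mu := fun a => if Nat.eq_dec a a1 then 0 else mu0 a).
  assert (Hmuq : forall a, Qr (mu a)) by (intros a; unfold mu; destruct (Nat.eq_dec a a1); auto; apply Qr_0).
  assert (Hmus : forall j, (j < S f)%nat -> lsum s (fun a => mu a * CC a j) = 0).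
  { intros j Hj. rewrite (lsum_remove s a1) by auto. unfold mu at 1. destruct (Nat.eq_dec a1 a1); [|congruence].
    rewrite (lsum_ext _ (fun a => mu a * CC a j) (fun a => mu0 a * CC a j)).
    - rewrite Hms by auto. ring.
    - intros a Ha. apply in_remove in Ha as [_ Hne]. unfold mu. destruct (Nat.eq_dec a a1); [congruence|auto]. }
  pose proof (span_sum f Hv s CC BB lam HEq Hls) as SL.
  pose proof (span_sum f Hv s CC BB mu HEq Hmus) as SM.
  set (U := lsum s (fun a => lam a * BB a)) in *. set (V := lsum s (fun a => mu a * BB a)) in *.
  assert (HU : CS (4*f) U).
  { apply CS_lsum; auto. intros a Ha. apply CS_scal; auto. }
  assert (HV : CS (4*f) V).
  { apply CS_lsum; auto. intros a Ha. apply CS_scal; auto. }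
  destruct (classic (U = 0 /\ V = 0)) as [[U0 V0]|NUV].
  - exists (fun a => (lam a, 0)). split; [|split].
    + intros a _. apply Qr_alg; auto.
    + exists a1. split; auto. intros E. inversion E. auto.
    + rewrite Clincomb_real, SL, U0. unfold C0. f_equal. ring.
  - exists (fun a => (V * lam a - U * mu a, 0)). split; [|split].
    + intros a _. apply CS_alg with (4*f)%nat; [lia|].
      replace (V * lam a - U * mu a) with (lam a * V + (- mu a) * U) by ring.
      apply CS_plus; apply CS_scal; auto. apply Qr_opp; auto.
    + destruct (Req_dec V 0) as [V0|V0].
      * exists a2. split; auto. intros E. inversion E as [E1].
        assert (U <> 0) by tauto. unfold mu in E1. destruct (Nat.eq_dec a2 a1); [congruence|].
        rewrite V0 in E1. assert (U * mu0 a2 = 0) by lra. apply Rmult_integral in H1. tauto.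
      * exists a1. split; auto. intros E. inversion E as [E1].
        unfold mu in E1. destruct (Nat.eq_dec a1 a1); [|congruence].
        assert (V * lam a1 = 0) by lra. apply Rmult_integral in H0. tauto.
    + rewrite Clincomb_real. unfold C0. f_equal.
      rewrite (lsum_ext s _ (fun a => V * (lam a * Hv a) + (- U) * (mu a * Hv a))) by (intros; ring).
      rewrite lsum_plus, !lsum_scal, SL, SM. ring.
Qed.
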